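(* Let $j>0$ and $a_0,\dots,a_j\in\mathbb{Z}$, and let $p(t)=a_0+a_1t+\cdots+a_jt^j$. Suppose there is an integer polynomial $q(t)=b_0+b_1t+\cdots+b_\ell t^\ell$ with $p(t)\,q(t)=1-t^{j+\ell}$. For each integer $n\ge j+1$ let $G_n$ be the abelian group with generators $x_i$, $i\in\mathbb{Z}/n\mathbb{Z}$, and relations $a_0x_i+a_1x_{i+1}+\cdots+a_jx_{i+j}=0$ for every $i\in\mathbb{Z}/n\mathbb{Z}$. Then $G_n\cong G_{n+j+\ell}$ for every $n\ge j+1$. *)

(* Defs.v *)
From HB Require Import structures.
From mathcomp Require Import all_boot all_order all_algebra.
Set Implicit Arguments. Unset Strict Implicit. Unset Printing Implicit Defensive.
Import Order.TTheory GRing.Theory Num.Theory.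
Local Open Scope ring_scope.

(* Relation matrix of G_n: row i (i in Z/nZ, represented by 'I_n) is the
   coefficient vector of the relation  a_0 x_i + a_1 x_{i+1} + ... + a_j x_{i+j},
   indices taken mod n. *)
Definition relmx (j : nat) (a : nat -> int) (n : nat) : 'M[int]_n :=
  \matrix_(i < n, k < n) \sum_(t < j.+1 | ((i + t) %% n)%N == k) a t.

(* u (an element of the free abelian group Z^n on x_0..x_{n-1}) lies in the
   subgroup generated by the relations, i.e. u = 0 in G_n. *)
Arguments relmx : clear implicits.
Definition inrel (j : nat) (a : nat -> int) (n : nat) (u : 'rV[int]_n) : Prop :=
  exists w : 'rV[int]_n, u = w *m relmx j a n.

Arguments inrel : clear implicits.
(* G_n = Z^n / <relations>.  An isomorphism G_n -> G_m is given by a group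
   homomorphism phi : Z^n -> Z^m (every hom out of G_n lifts to the free group)
   which maps the relation subgroup into the relation subgroup (well defined),
   whose induced map is injective, and whose induced map is surjective. *)
Definition G_iso (j : nat) (a : nat -> int) (n m : nat) : Prop :=
  exists phi : 'rV[int]_n -> 'rV[int]_m,
    {morph phi : x y / x + y} /\
    (forall u, inrel j a n u <-> inrel j a m (phi u)) /\
    (forall y, exists x, inrel j a m (phi x - y)).

(* Main.v *)
Require Import Defs.
From HB Require Import structures.
From mathcomp Require Import all_boot all_order all_algebra.
From mathcomp Require Import ring.
Import GRing.Theory.
Local Open Scope ring_scope.
Set Implicit Arguments. Unset Strict Implicit.

Definition ordm (m : nat) (hm : (0 < m)%N) (e : nat) : 'I_m := Ordinal (ltn_pmod e hm).
Definition dv (m : nat) (hm : (0 < m)%N) (e : nat) : 'rV[int]_m := 'e_(ordm hm e).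
Definition red (m : nat) (hm : (0 < m)%N) (f : {poly int}) : 'rV[int]_m :=
  \sum_(e < size f) f`_e *: dv hm e.

Lemma redE (m : nat) (hm : (0 < m)%N) (f : {poly int}) B : (size f <= B)%N -> red hm f = \sum_(e < B) f`_e *: dv hm e.
Proof.
move=> hB; rewrite /red (big_ord_widen B (fun e => f`_e *: dv hm e) hB) big_mkcond /=.
apply: eq_bigr => i _; case: ifP => // /negbT; rewrite -leqNgt => h.
by rewrite nth_default // scale0r.
Qed.

Lemma redD (m : nat) (hm : (0 < m)%N) (f g : {poly int}) : red hm (f + g) = red hm f + red hm g.
Proof.
set B := maxn (size f) (size g).
rewrite (@redE _ _ (f + g) B); last by rewrite (leq_trans (size_polyD _ _)).
rewrite (@redE _ _ f B) ?leq_maxl // (@redE _ _ g B) ?leq_maxr // -big_split /=.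
by apply: eq_bigr => i _; rewrite coefD scalerDl.
Qed.

Lemma redZ (m : nat) (hm : (0 < m)%N) c (f : {poly int}) : red hm (c *: f) = c *: red hm f.
Proof.
rewrite (@redE _ _ (c *: f) (size f)) ?size_scale_leq // /red scaler_sumr.
by apply: eq_bigr => i _; rewrite coefZ scalerA.
Qed.

Lemma red0 (m : nat) (hm : (0 < m)%N) : red hm 0 = 0.
Proof. by rewrite /red size_poly0 big_ord0. Qed.

Lemma redN (m : nat) (hm : (0 < m)%N) (f : {poly int}) : red hm (- f) = - red hm f.
Proof. by rewrite -scaleN1r redZ scaleN1r. Qed.

Lemma redB (m : nat) (hm : (0 < m)%N) (f g : {poly int}) : red hm (f - g) = red hm f - red hm g.
Proof. by rewrite redD redN. Qed.

Lemma red_sum (m : nat) (hm : (0 < m)%N) (I : Type) (r : seq I) (P : pred I) (F : I -> {poly int}) :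
  red hm (\sum_(i <- r | P i) F i) = \sum_(i <- r | P i) red hm (F i).
Proof.
elim/big_rec2: _ => [|i y1 y2 _ <-]; first by rewrite red0.
by rewrite redD.
Qed.

Lemma red_X (m : nat) (hm : (0 < m)%N) e : red hm 'X^e = dv hm e.
Proof.
rewrite /red size_polyXn big_ord_recr /= coefXn eqxx scale1r big1 ?add0r //.
by move=> i _; rewrite coefXn eq_sym gtn_eqF // scale0r.
Qed.

Lemma poly_exp (f : {poly int}) : f = \sum_(e < size f) f`_e *: 'X^e.
Proof. by rewrite -poly_def coefK. Qed.

Lemma dv_mod (m : nat) (hm : (0 < m)%N) e : dv hm (e + m) = dv hm e.
Proof. by rewrite /dv /ordm; congr 'e__; apply: val_inj => /=; rewrite modnDr. Qed.

Lemma red_mulXm (m : nat) (hm : (0 < m)%N) (g : {poly int}) : red hm (g * 'X^m) = red hm g.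
Proof.
rewrite {1}(poly_exp g) mulr_suml red_sum {2}/red.
apply: eq_bigr => i _; rewrite -scalerAl redZ -exprD red_X dv_mod //.
Qed.

Definition Dv (m : nat) (g : {poly int}) := exists d, g = d * ('X^m - 1).

Lemma red_D (m : nat) (hm : (0 < m)%N) (g : {poly int}) : Dv m g -> red hm g = 0.
Proof. by case=> d ->; rewrite mulrBr mulr1 redB red_mulXm subrr. Qed.

Lemma Dv0 (m : nat) : Dv m 0. Proof. by exists 0; rewrite mul0r. Qed.
Lemma DvD (m : nat) (f g : {poly int}) : Dv m f -> Dv m g -> Dv m (f + g).
Proof. by case=> d1 -> [d2 ->]; exists (d1 + d2); rewrite mulrDl. Qed.
Lemma DvN (m : nat) (f : {poly int}) : Dv m f -> Dv m (- f).
Proof. by case=> d1 ->; exists (- d1); rewrite mulNr. Qed.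
Lemma DvM (m : nat) (h f : {poly int}) : Dv m f -> Dv m (h * f).
Proof. by case=> d1 ->; exists (h * d1); rewrite mulrA. Qed.
Lemma DvZ (m : nat) c (f : {poly int}) : Dv m f -> Dv m (c *: f).
Proof. by move=> H; rewrite -mul_polyC; apply: DvM. Qed.
Lemma Dv_sum (m : nat) (I : Type) (r : seq I) (P : pred I) (F : I -> {poly int}) :
  (forall i, P i -> Dv m (F i)) -> Dv m (\sum_(i <- r | P i) F i).
Proof. by move=> H; apply: (big_ind (Dv m)) => //; [apply: Dv0 | apply: DvD]. Qed.

Lemma Dv_X (m : nat) e : Dv m ('X^e - 'X^(e %% m)).
Proof.
rewrite {1}(divn_eq e m) exprD mulnC exprM -{2}['X^(e %% m)]mul1r -mulrBl.
by rewrite mulrC; apply: DvM; rewrite subrX1 mulrC; exists (\sum_(i < e %/ m) ('X^m) ^+ i).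
Qed.

Definition P (m : nat) (u : 'rV[int]_m) : {poly int} := \sum_(k < m) u 0 k *: 'X^k.

Lemma PD (m : nat) (u v : 'rV[int]_m) : P (u + v) = P u + P v.
Proof. by rewrite /P -big_split; apply: eq_bigr => i _; rewrite mxE scalerDl. Qed.
Lemma PN (m : nat) (u : 'rV[int]_m) : P (- u) = - P u.
Proof. by rewrite /P -sumrN; apply: eq_bigr => i _; rewrite mxE scaleNr. Qed.
Lemma PB (m : nat) (u v : 'rV[int]_m) : P (u - v) = P u - P v.
Proof. by rewrite PD PN. Qed.

Lemma redP (m : nat) (hm : (0 < m)%N) (u : 'rV[int]_m) : red hm (P u) = u.
Proof.
rewrite /P red_sum [RHS]row_sum_delta; apply: eq_bigr => i _.
rewrite redZ red_X /dv /ordm; congr (_ *: 'e__); apply: val_inj => /=.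
by rewrite modn_small.
Qed.

Lemma P_e (m : nat) (i : 'I_m) : P 'e_i = 'X^i.
Proof.
rewrite /P (bigD1 i) //= big1 ?addr0; first by rewrite mxE !eqxx scale1r.
by move=> k hk; rewrite mxE eqxx /= (negbTE hk) scale0r.
Qed.

Lemma P_sum (m : nat) (I : Type) (r : seq I) (Q : pred I) (F : I -> 'rV[int]_m) :
  P (\sum_(i <- r | Q i) F i) = \sum_(i <- r | Q i) P (F i).
Proof.
elim/big_rec2: _ => [|i y1 y2 _ <-]; last by rewrite PD.
by rewrite /P big1 // => i _; rewrite mxE scale0r.
Qed.

Lemma PZ (m : nat) c (u : 'rV[int]_m) : P (c *: u) = c *: P u.
Proof. by rewrite /P scaler_sumr; apply: eq_bigr => i _; rewrite mxE scalerA. Qed.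

Lemma Dv_Pred (m : nat) (hm : (0 < m)%N) (f : {poly int}) : Dv m (f - P (red hm f)).
Proof.
rewrite {1}(poly_exp f) /red P_sum -sumrB; apply: Dv_sum => i _.
by rewrite PZ /dv P_e -scalerBr; apply: DvZ; apply: Dv_X.
Qed.

Lemma red_row (m : nat) (hm : (0 < m)%N) j (a : nat -> int) (i : 'I_m) :
  red hm ('X^i * \poly_(t < j.+1) a t) = row i (relmx j a m).
Proof.
rewrite poly_def mulr_sumr red_sum; apply/rowP => k.
rewrite !mxE summxE [RHS]big_mkcond /=; apply: eq_bigr => t _.
rewrite mulrC -scalerAl -exprD redZ red_X /dv !mxE /=.
have -> : (k == ordm hm (t + i)) = (((i + t) %% m)%N == k).
  by rewrite eq_sym -val_eqE /= addnC.
by case: ifP => _; rewrite ?mulr1 ?mulr0.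
Qed.

Lemma red_mulp (m : nat) (hm : (0 < m)%N) j (a : nat -> int) (f : {poly int}) :
  red hm (f * \poly_(t < j.+1) a t) = red hm f *m relmx j a m.
Proof.
set p := \poly_(t < j.+1) a t.
rewrite {1}(poly_exp f) mulr_suml red_sum [red hm f]/red mulmx_suml; apply: eq_bigr => e _.
rewrite -scalerAl redZ -scalemxAl; congr (_ *: _).
have -> : red hm ('X^e * p) = red hm ('X^(e %% m) * p).
  apply/eqP; rewrite -subr_eq0 -redB -mulrBl; apply/eqP/red_D.
  by rewrite mulrC; apply: DvM; apply: Dv_X.
have -> : (e %% m)%N = ordm hm e by [].
by rewrite red_row /dv rowE.
Qed.

Definition Iid (m : nat) (p f : {poly int}) := exists c d, f = c * p + d * ('X^m - 1).

Lemma inrel_red (m : nat) (hm : (0 < m)%N) j (a : nat -> int) (f : {poly int}) :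
  inrel j a m (red hm f) <-> Iid m (\poly_(t < j.+1) a t) f.
Proof.
set p := \poly_(t < j.+1) a t.
split.
  case=> w hw.
  have h1 : red hm f = red hm (P w * p) by rewrite red_mulp redP.
  have [d1 e1] := Dv_Pred hm f.
  have [d2 e2] := Dv_Pred hm (P w * p).
  exists (P w), (d1 - d2).
  rewrite mulrBl -e1 -e2 h1; ring.
case=> c [d ->]; exists (red hm c).
by rewrite redD (red_D hm (ex_intro _ d erefl)) addr0 red_mulp.
Qed.

Lemma Iid_shift (n s : nat) (p q f : {poly int}) :
  p * q = 1 - 'X^s -> Iid n p f <-> Iid (n + s) p f.
Proof.
move=> hpq; have hXs : 'X^s = 1 - p * q by rewrite hpq; ring.
split; case=> c [d ->].
  exists (c + d * 'X^n * q), d; rewrite exprD hXs; ring.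
exists (c - d * 'X^n * q), d; rewrite exprD hXs; ring.
Qed.

Theorem theorem5p5 (j l : nat) (a b : nat -> int) (hj : (0 < j)%N)
  (hpq : (\poly_(i < j.+1) a i) * (\poly_(i < l.+1) b i) = 1 - 'X^(j + l))
  (n : nat) (hn : (j.+1 <= n)%N) :
  G_iso j a n (n + j + l).
Proof.
have hn0 : (0 < n)%N by apply: leq_trans hn.
have hN0 : (0 < n + j + l)%N by rewrite -addnA ltn_addr.
set p := \poly_(i < j.+1) a i.
have HI f : Iid n p f <-> Iid (n + j + l) p f by rewrite -addnA; apply: Iid_shift hpq.
exists (fun u => red hN0 (P u)); split; last split.
- by move=> x y; rewrite PD redD.
- move=> u; rewrite -{1}(redP hn0 u) !inrel_red; exact: HI.
- move=> y; exists (red hn0 (P y)).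
  rewrite -{2}(redP hN0 y) -redB inrel_red; apply/HI.
  have [d e] := Dv_Pred hn0 (P y).
  exists 0, (- d); rewrite mul0r add0r mulNr -e; ring.
Qed.
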